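(* Let $T\in\mathrm{Aut}(X,\mu)$ be aperiodic and $\varphi$ a metric-compatible function. For every $U\in[T]_\varphi$ and every measurable $A\subseteq X$, one has $d_{\varphi,T}(U_A,\mathrm{id})\le d_{\varphi,T}(U,\mathrm{id})$; in particular $U_A\in[T]_\varphi$.
   Context: $(X,\mu)$ standard atomless probability space; $\mathrm{Aut}(X,\mu)$ measure-preserving transformations modulo null sets. For aperiodic $T$, $[T]$ is the set of $U\in\mathrm{Aut}(X,\mu)$ with $U(x)=T^{c_U(x)}(x)$ a.e. for a measurable $c_U:X\to\mathbb Z$. $\varphi:\mathbb R_+\to\mathbb R_+$ is metric-compatible if subadditive, non-decreasing, $\varphi(0)=0$, $\varphi(t)>0$ for $t>0$. $[T]_\varphi=\{U\in[T]:\int_X\varphi(|c_U|)d\mu<\infty\}$, $d_{\varphi,T}(U,V)=\int_X\varphi(|c_U(x)-c_V(x)|)d\mu$. For $U\in\mathrm{Aut}(X,\mu)$ and measurable $A$, the first return map $U_A$ is defined by $U_A(x)=U^{n(x)}(x)$ with $n(x)=\min\{n\ge1:U^n(x)\in A\}$ for $x\in A$ (defined a.e. by Poincaré recurrence) and $U_A(x)=x$ for $x\notin A$. *)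

(* Defs.v *)
From HB Require Import structures.
From mathcomp Require Import all_boot all_order all_algebra.
From mathcomp Require Import all_classical all_reals all_analysis.
Set Implicit Arguments. Unset Strict Implicit. Unset Printing Implicit Defensive.
Import Order.TTheory GRing.Theory Num.Theory.
Local Open Scope classical_set_scope.
Local Open Scope ring_scope.

Section Defs.
Context (d : measure_display) (X : measurableType d) (R : realType).

(* (X, mu) is a standard Borel space: Borel isomorphic to a Borel subset of R *)
Definition standard_borel : Prop :=
  exists f : X -> R, measurable_fun setT f /\ injective f /\
    (forall A : set X, measurable A -> measurable (f @` A)).

Definition atomless (mu : probability X R) : Prop :=
  forall A : set X, measurable A -> (0 < mu A)%E ->
    exists B : set X, [/\ measurable B, B `<=` A, (0 < mu B)%E & (mu B < mu A)%E].

Definition is_aut (mu : probability X R) (T Tinv : X -> X) : Prop :=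
  [/\ measurable_fun setT T, measurable_fun setT Tinv,
      cancel T Tinv, cancel Tinv T &
      forall A : set X, measurable A -> mu (T @^-1` A) = mu A].

Definition Tpow (T Tinv : X -> X) (n : int) : X -> X :=
  match n with
  | Posz k => iter k T
  | Negz k => iter k.+1 Tinv
  end.

Definition aperiodic (mu : probability X R) (T Tinv : X -> X) : Prop :=
  {ae mu, forall x, forall n : int, n != 0 -> Tpow T Tinv n x != x}.

Definition cocycle (mu : probability X R) (T Tinv U : X -> X) (c : X -> int) : Prop :=
  (forall k : int, measurable [set x | c x = k]) /\
  {ae mu, forall x, U x = Tpow T Tinv (c x) x}.

Definition metric_compatible (phi : R -> R) : Prop :=
  [/\ (forall t, 0 <= t -> 0 <= phi t),
      (forall s t, 0 <= s -> 0 <= t -> phi (s + t) <= phi s + phi t),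
      (forall s t, 0 <= s -> s <= t -> phi s <= phi t),
      phi 0 = 0 &
      (forall t, 0 < t -> 0 < phi t)].

(* \int phi(|c|) dmu ; equals d_{phi,T}(U, id) when c is the cocycle of U *)
Definition phi_int (mu : probability X R) (phi : R -> R) (c : X -> int) : \bar R :=
  (\int[mu]_x (phi (`|c x|%:~R))%:E)%E.

(* first return time to A (0 if x never returns) *)
Definition return_time (U : X -> X) (A : set X) (x : X) : nat :=
  match pselect (exists n, ((0 < n)%N && `[< A (iter n U x) >])) with
  | left H => ex_minn H
  | right _ => 0%N
  end.

Definition first_return (U : X -> X) (A : set X) (x : X) : X :=
  if `[< A x >] then iter (return_time U A x) U x else x.

End Defs.

(* Main.v *)
Require Import Defs.
From HB Require Import structures.
From mathcomp Require Import all_boot all_order all_algebra.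
From mathcomp Require Import all_classical all_reals all_analysis.
From mathcomp Require Import measurable_realfun.
From mathcomp Require Import zify ring lra.
Import Order.TTheory GRing.Theory Num.Theory.
Local Open Scope classical_set_scope.
Local Open Scope ring_scope.

Section Tpow_lemmas.
Context (d : measure_display) (X : measurableType d) (R : realType).
Variables (T Tinv : X -> X) (TK : cancel T Tinv) (TiK : cancel Tinv T).

Lemma TpowS (z : int) x : Tpow T Tinv (z + 1) x = T (Tpow T Tinv z x).
Proof.
case: z => [n|n] /=.
  by rewrite addn1.
case: n => [|n].
  by rewrite /= TiK.
have -> : Negz n.+1 + 1 = Negz n.
  by rewrite !NegzE; lia.
by rewrite /= TiK.
Qed.

Lemma TpowN (z : int) x : Tpow T Tinv (z - 1) x = Tinv (Tpow T Tinv z x).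
Proof. by rewrite -{2}(subrK 1 z) TpowS TK. Qed.

Lemma TpowD (a b : int) x : Tpow T Tinv a (Tpow T Tinv b x) = Tpow T Tinv (a + b) x.
Proof.
case: a => [n|n].
  elim: n => [|n IH]; first by rewrite add0r.
  have -> : (Posz n.+1 = Posz n + 1)%R by lia.
  by rewrite -addrA [1 + b]addrC addrA !TpowS IH.
elim: n => [|n IH].
  change (Tpow T Tinv (0 - 1) (Tpow T Tinv b x) = Tpow T Tinv ((0 - 1) + b) x).
  by rewrite addrAC !TpowN add0r.
have e : Negz n.+1 = Negz n - 1.
  rewrite !NegzE. lia.
rewrite e.
by rewrite -[in RHS]addrAC !TpowN IH.
Qed.
End Tpow_lemmas.

Lemma preim_meas d1 d2 (X1 : measurableType d1) (X2 : measurableType d2)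
  (f : X1 -> X2) (B : set X2) :
  measurable_fun setT f -> measurable B -> measurable (f @^-1` B).
Proof. by move=> mf mB; rewrite -[f @^-1` _]setTI; exact: mf. Qed.


Lemma meas_and d1 (X1 : measurableType d1) (S : X1 -> Prop) (P : Prop) :
  measurable [set x | S x] -> measurable [set x | S x /\ P].
Proof.
move=> mS; case: (pselect P) => [p|np].
  by rewrite (_ : [set x | S x /\ P] = [set x | S x]) //; apply/seteqP; split => x //= [].
by rewrite (_ : [set x | S x /\ P] = set0) //; apply/seteqP; split => x //= [].
Qed.

Lemma int_comp_meas d1 d2 (X1 : measurableType d1) (Y : measurableType d2)
  (f : X1 -> int) (F : int -> Y) :
  (forall k, measurable [set x | f x = k]) -> measurable_fun setT (F \o f).
Proof.
move=> hf _ B mB; rewrite setTI.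
have -> : (F \o f) @^-1` B = \bigcup_n ([set x | f x = Posz n /\ B (F (Posz n))]
   `|` [set x | f x = Negz n /\ B (F (Negz n))]).
  apply/seteqP; split => x /=.
    move=> Bx; case E: (f x) => [n|n]; exists n => //.
      by left; rewrite -E.
    by right; rewrite -E.
  by move=> [n _ [[/= -> ?]|[/= -> ?]]].
apply: bigcupT_measurable => n; apply: measurableU.
  exact: (@meas_and _ _ _ (B (F (Posz n))) (hf (Posz n))).
exact: (@meas_and _ _ _ (B (F (Negz n))) (hf (Negz n))).
Qed.

Lemma int_level_meas d1 (X1 : measurableType d1) (R : realType) (f : X1 -> int) :
  measurable_fun setT (fun x => (f x)%:~R : R) -> forall k, measurable [set x | f x = k].
Proof.
move=> mf k.
rewrite (_ : [set x | f x = k] = (fun x => (f x)%:~R : R) @^-1` [set k%:~R]).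
  exact: preim_meas mf (measurable_set1 _).
by apply/seteqP; split => x /=; [move=> ->|move/intr_inj].
Qed.
Section Main.
Context (d : measure_display) (X : measurableType d) (R : realType).
Variables (mu : probability X R) (U Uinv : X -> X) (hU : is_aut mu U Uinv).

Lemma mU : measurable_fun setT U. Proof. by case: hU. Qed.
Lemma UK : cancel U Uinv. Proof. by case: hU. Qed.
Lemma UiK : cancel Uinv U. Proof. by case: hU. Qed.
Lemma Upres B : measurable B -> mu (U @^-1` B) = mu B. Proof. by case: hU => _ _ _ _; apply. Qed.

Lemma iterK k x : iter k Uinv (iter k U x) = x.
Proof. by elim: k x => [//|k IH] x; rewrite iterSr /= UK IH. Qed.

Lemma iterKi k x : iter k U (iter k Uinv x) = x.
Proof. by elim: k x => [//|k IH] x; rewrite iterSr /= UiK IH. Qed.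

Lemma miter k : measurable_fun setT (iter k U).
Proof.
elim: k => [|k IH]; first exact: measurable_id.
exact: (measurableT_comp mU IH).
Qed.

Lemma iter_pres k B : measurable B -> mu (iter k U @^-1` B) = mu B.
Proof.
elim: k B => [//|k IH] B mB.
rewrite (_ : iter k.+1 U @^-1` B = iter k U @^-1` (U @^-1` B)) //.
by rewrite IH ?Upres //; exact: preim_meas mU mB.
Qed.


Variables (A : set X) (mA : measurable A).

Local Notation rt := (return_time U A).

Lemma rt_spec x :
  (rt x = 0%N /\ forall n, (0 < n)%N -> ~ A (iter n U x)) \/
  [/\ (0 < rt x)%N, A (iter (rt x) U x) &
     forall j, (0 < j)%N -> (j < rt x)%N -> ~ A (iter j U x)].
Proof.
rewrite /return_time; case: pselect => [H|H].
  case: ex_minnP => m /andP[m0 /asboolP Am] mmin; right; split => //.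
  move=> j j0 jm Aj; have := mmin j; rewrite j0 /=.
  move=> /(_ (asboolT Aj)); rewrite leqNgt jm //.
left; split => // n n0 An; apply: H; exists n; rewrite n0; exact/asboolP.
Qed.

Lemma rt_eq x m : (0 < m)%N -> A (iter m U x) ->
  (forall j, (0 < j)%N -> (j < m)%N -> ~ A (iter j U x)) -> rt x = m.
Proof.
move=> m0 Am hm; case: (rt_spec x) => [[_ H]|[r0 Ar hr]].
  by exfalso; exact: (H m m0 Am).
case: (ltngtP (rt x) m) => // h.
  by exfalso; exact: (hm _ r0 h Ar).
by exfalso; exact: (hr _ m0 h Am).
Qed.

Lemma rt_eq0 x : (forall n, (0 < n)%N -> ~ A (iter n U x)) -> rt x = 0%N.
Proof.
move=> H; case: (rt_spec x) => [[//]|[r0 Ar _]].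
by exfalso; exact: (H _ r0 Ar).
Qed.

Lemma rt_level_meas m : measurable [set x | rt x = m].
Proof.
case: m => [|m].
  rewrite (_ : [set x | rt x = 0%N] = \bigcap_n (iter n.+1 U @^-1` ~` A)).
    apply: bigcapT_measurable => n; apply: preim_meas; first exact: miter.
    exact: measurableC.
  apply/seteqP; split => x /=.
    move=> h n _ /=; case: (rt_spec x) => [[_ H]|[r0 Ar _]].
      exact: (H n.+1 erefl).
    by rewrite h in r0.
  move=> h; apply: rt_eq0 => -[//|n] _; exact: h.
rewrite (_ : [set x | rt x = m.+1] = iter m.+1 U @^-1` A `&`
   \bigcap_(j in [set j | (0 < j < m.+1)%N]) (iter j U @^-1` ~` A)).
  apply: measurableI; first by apply: preim_meas => //; exact: miter.
  apply: bigcap_measurableType => j _; apply: preim_meas; first exact: miter.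
  exact: measurableC.
apply/seteqP; split => x /=.
  move=> h; case: (rt_spec x) => [[h0 _]|[r0 Ar hr]]; first by rewrite h in h0.
  rewrite h in Ar hr; split => // j /= /andP[j0 jm]; exact: hr.
move=> [Am hm]; apply: rt_eq => // j j0 jm; apply: (hm j) => /=.
by rewrite j0 jm.
Qed.

Variables (c : X -> int) (hcm : forall k, measurable [set x | c x = k]).

Definition Ssum m x : int := \sum_(k < m) c (iter k U x).
Definition cA x : int := if `[< A x >] then Ssum (rt x) x else 0.

Lemma cR_meas : measurable_fun setT (fun x => (c x)%:~R : R).
Proof. exact: (@int_comp_meas _ _ _ _ c (fun k => k%:~R : R) hcm). Qed.

Lemma Ssum_meas m : measurable_fun setT (fun x => (Ssum m x)%:~R : R).
Proof.
have -> : (fun x => (Ssum m x)%:~R : R) = (fun x => \sum_(k < m) (c (iter k U x))%:~R).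
  apply/funext => x; rewrite /Ssum; elim: m => [|m IH]; first by rewrite !big_ord0.
  by rewrite !big_ord_recr /= intrD IH.
apply: measurable_sum => k.
exact: (measurableT_comp cR_meas (miter k)).
Qed.

Lemma cA_level_meas z : measurable [set x | cA x = z].
Proof.
rewrite (_ : [set x | cA x = z] = (~` A `&` [set _ | z = 0]) `|`
   \bigcup_m (A `&` [set x | rt x = m] `&` [set x | Ssum m x = z])).
  apply: measurableU.
    apply: measurableI; first exact: measurableC.
    by case: (pselect (z = 0)) => [->|nz]; [rewrite (_ : [set _ | 0 = 0] = setT) //; apply/seteqP; split|rewrite (_ : [set _ | z = 0] = set0) //; apply/seteqP; split].
  apply: bigcupT_measurable => m; apply: measurableI; first apply: measurableI => //.
    exact: rt_level_meas.
  exact: (@int_level_meas _ _ R _ (Ssum_meas m) z).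
apply/seteqP; split => x /=; rewrite /cA.
  case: (pselect (A x)) => [Ax|nAx].
    by rewrite (asboolT Ax) => h; right; exists (rt x) => //.
  by rewrite (asboolF nAx) => h; left.
move=> [[nAx <-]|[m _ [[Ax <-] <-]]]; first by rewrite (asboolF nAx).
by rewrite (asboolT Ax).
Qed.

Variables (T Tinv : X -> X) (TK : cancel T Tinv) (TiK : cancel Tinv T).

Lemma ae_iter (P : X -> Prop) k : {ae mu, forall x, P x} -> {ae mu, forall x, P (iter k U x)}.
Proof.
move=> [N [mN N0 sub]]; exists (iter k U @^-1` N); split.
- exact: preim_meas (miter k) mN.
- by rewrite iter_pres.
- by move=> x /= nP; apply: sub.
Qed.

Lemma iter_Tpow x : (forall k, U (iter k U x) = Tpow T Tinv (c (iter k U x)) (iter k U x)) ->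
  forall m, iter m U x = Tpow T Tinv (Ssum m x) x.
Proof.
move=> h; elim => [|m IH]; first by rewrite /Ssum big_ord0.
rewrite iterS h IH TpowD // /Ssum big_ord_recr /= addrC.
by rewrite -IH.
Qed.

Hypothesis hc : {ae mu, forall x, U x = Tpow T Tinv (c x) x}.

Lemma cA_cocycle : cocycle mu T Tinv (first_return U A) cA.
Proof.
split; first exact: cA_level_meas.
have := @ae_foralln _ _ _ mu (fun k x => U (iter k U x) = Tpow T Tinv (c (iter k U x)) (iter k U x))
  (fun k => @ae_iter (fun y => U y = Tpow T Tinv (c y) y) k hc).
apply: filterS => x /iter_Tpow h.
rewrite /first_return /cA; case: (pselect (A x)) => [Ax|nAx].
  by rewrite (asboolT Ax) h.
by rewrite (asboolF nAx).
Qed.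

Hypothesis haper : aperiodic mu T Tinv.

Lemma cocycle_unique c' : cocycle mu T Tinv (first_return U A) c' ->
  {ae mu, forall x, c' x = cA x}.
Proof.
move=> [_ h']; have [_ h] := cA_cocycle.
apply: (filterS3 _ _ haper h h') => x ap e1 e2.
have e : Tpow T Tinv (c' x) x = Tpow T Tinv (cA x) x by rewrite -e1 -e2.
have e3 : Tpow T Tinv (c' x - cA x) x = x.
  rewrite addrC -TpowD // e TpowD // addNr //.
apply/eqP; rewrite -subr_eq0; apply/negP => /negP nz.
by move: (ap _ nz); rewrite e3 eqxx.
Qed.

Variables (phi : R -> R) (hphi : metric_compatible phi).

Definition hfun (z : int) : \bar R := (phi (`|z|%:~R))%:E.

Lemma hfun_ge0 z : (0 <= hfun z)%E.
Proof.
case: hphi => h0 _ _ _ _; rewrite /hfun lee_fin; apply: h0.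
by rewrite ler0z normr_ge0.
Qed.

Lemma hfunD a b : (hfun (a + b) <= hfun a + hfun b)%E.
Proof.
case: hphi => h0 hsub hmon _ _; rewrite /hfun -EFinD lee_fin.
have pa : (0 : R) <= `|a|%:~R by rewrite ler0z normr_ge0.
have pb : (0 : R) <= `|b|%:~R by rewrite ler0z normr_ge0.
apply: le_trans (hsub _ _ pa pb).
apply: hmon; first by rewrite ler0z normr_ge0.
by rewrite -intrD ler_int ler_normD.
Qed.

Lemma hfun_sum m (a : nat -> int) :
  (hfun (\sum_(k < m) a k) <= \sum_(k < m) hfun (a k))%E.
Proof.
elim: m => [|m IH].
  rewrite !big_ord0 /hfun normr0 /=; case: hphi => _ _ _ -> _; exact: lexx.
rewrite !big_ord_recr /=; apply: le_trans (hfunD _ _) _.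
exact: leeD.
Qed.

Lemma hc_meas (f : X -> int) : (forall k, measurable [set x | f x = k]) ->
  measurable_fun setT (fun x => hfun (f x)).
Proof. move=> hf; exact: (@int_comp_meas _ _ X (\bar R) f hfun hf). Qed.

Definition C k := [set x | A x /\ forall j, (0 < j <= k)%N -> ~ A (iter j U x)].

Lemma C_meas k : measurable (C k).
Proof.
rewrite (_ : C k = A `&` \bigcap_(j in [set j | (0 < j <= k)%N]) (iter j U @^-1` ~` A)).
  apply: measurableI => //.
  apply: bigcap_measurableType => j _; apply: preim_meas; first exact: miter.
  exact: measurableC.
by apply/seteqP; split => x /= [Ax h]; split => // j /= jk; apply: h.
Qed.

Definition g k := (fun x => hfun (c (iter k U x))) \_ (C k).

Lemma g_ge0 k x : (0 <= g k x)%E.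
Proof. by rewrite /g /patch; case: ifP => _ //; exact: hfun_ge0. Qed.

Lemma g_meas k : measurable_fun setT (g k).
Proof.
apply/(measurable_restrictT _ (C_meas k)).
apply: measurable_funTS.
exact: (measurableT_comp (hc_meas c hcm) (miter k)).
Qed.

Lemma pointwise x : (hfun (cA x) <= \sum_(k <oo) g k x)%E.
Proof.
rewrite /cA; case: (pselect (A x)) => [Ax|nAx]; last first.
  rewrite (asboolF nAx) /hfun normr0 /=; case: hphi => _ _ _ -> _.
  by apply: nneseries_ge0 => n _ _; exact: g_ge0.
rewrite (asboolT Ax) /Ssum; apply: (le_trans (hfun_sum (rt x) (fun k => c (iter k U x)))).
apply: le_trans (nneseries_lim_ge (rt x) (fun n _ _ => g_ge0 n x)).
rewrite big_mkord; apply: lee_sum => k _.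
have Ck : C k x.
  split => // j /andP[j0 jk]; case: (rt_spec x) => [[r0 _]|[_ _ hr]].
    have : (0 < rt x)%N by apply: leq_ltn_trans (ltn_ord k).
    by rewrite r0.
  apply: hr => //; exact: leq_ltn_trans jk (ltn_ord k).
by rewrite /g /patch mem_set.
Qed.

Lemma mUi : measurable_fun setT Uinv. Proof. by case: hU. Qed.

Lemma miterI k : measurable_fun setT (iter k Uinv).
Proof.
elim: k => [|k IH]; first exact: measurable_id.
exact: (measurableT_comp mUi IH).
Qed.

Definition Dk k := iter k Uinv @^-1` C k.

Lemma D_meas k : measurable (Dk k).
Proof. exact: preim_meas (miterI k) (C_meas k). Qed.

Lemma C_eq k : C k = iter k U @^-1` Dk k.
Proof. by apply/seteqP; split => x /=; rewrite /Dk /= iterK. Qed.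

Lemma D_triv : trivIset setT Dk.
Proof.
have key : forall i j y, (i < j)%N -> Dk i y -> Dk j y -> False.
  move=> i j y ij [Ai _] [_ hj].
  apply: (hj (j - i)%N); first by rewrite subn_gt0 ij leq_subr.
  have -> : iter j Uinv y = iter (j - i) Uinv (iter i Uinv y).
    by rewrite -iterD subnK // ltnW.
  by rewrite iterKi.
move=> i j _ _ [y [Di Dj]].
case: (ltngtP i j) => // ij; exfalso.
  exact: (key i j y).
exact: (key j i y).
Qed.

Lemma hcm_meas : measurable_fun setT (fun y => hfun (c y)).
Proof. exact: (hc_meas c hcm). Qed.

Lemma term_eq k : (\int[mu]_x g k x = \int[mu]_(y in Dk k) hfun (c y))%E.
Proof.
rewrite /g -(integral_mkcond (C k)) {1}C_eq.
transitivity (\int[pushforward mu (iter k U)]_(y in Dk k) hfun (c y))%E.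
  rewrite ge0_integral_pushforward //.
  - exact: miter.
  - exact: D_meas.
  - exact: measurable_funTS hcm_meas.
  - by move=> y _; exact: hfun_ge0.
apply: eq_measure_integral; first exact: miter.
move=> mi B mB _ /=.
by rewrite /pushforward iter_pres.
Qed.

Lemma main_ineq : (\int[mu]_x hfun (cA x) <= \int[mu]_x hfun (c x))%E.
Proof.
apply: (@le_trans _ _ (\int[mu]_x \sum_(k <oo) g k x)%E).
  apply: ge0_le_integral => //.
  - by move=> x _; exact: hfun_ge0.
  - exact: (hc_meas cA cA_level_meas).
  - exact: (@ge0_emeasurable_sum _ _ _ setT g xpredT (fun k x _ _ => g_ge0 k x) (fun k _ => g_meas k)).
  - by move=> x _; exact: pointwise.
rewrite integral_nneseries //; last first.
  - by move=> n x _; exact: g_ge0.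
  - by move=> n; exact: g_meas.
rewrite (eq_eseriesr (fun k _ => term_eq k)).
rewrite -ge0_integral_bigcup //.
- apply: ge0_subset_integral => //.
  + exact: bigcupT_measurable D_meas.
  + exact: hcm_meas.
  + by move=> y _; exact: hfun_ge0.
- exact: D_meas.
- exact: measurable_funTS hcm_meas.
- by move=> y _; exact: hfun_ge0.
- exact: D_triv.
Qed.

End Main.

Theorem mainTheorem14 (d : measure_display) (X : measurableType d) (R : realType)
  (mu : probability X R)
  (hstd : standard_borel X R) (hatom : atomless mu)
  (T Tinv : X -> X) (hT : is_aut mu T Tinv) (haper : aperiodic mu T Tinv)
  (phi : R -> R) (hphi : metric_compatible phi)
  (U Uinv : X -> X) (hU : is_aut mu U Uinv)
  (c : X -> int) (hc : cocycle mu T Tinv U c) (hcfin : (phi_int mu phi c < +oo)%E)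
  (A : set X) (hA : measurable A) :
  (exists cA : X -> int,
      cocycle mu T Tinv (first_return U A) cA /\ (phi_int mu phi cA < +oo)%E) /\
  (forall cA : X -> int, cocycle mu T Tinv (first_return U A) cA ->
      (phi_int mu phi cA <= phi_int mu phi c)%E).
Proof.
have [_ _ TK TiK _] := hT.
have [hcm hcae] := hc.
have cocA := @cA_cocycle _ _ _ mu U Uinv hU A hA c hcm T Tinv TK TiK hcae.
have ineq := @main_ineq _ _ _ mu U Uinv hU A hA c hcm phi hphi.
split.
  exists (cA d X U A c); split => //.
  exact: (le_lt_trans ineq hcfin).
move=> cA' hcA'.
have ae := @cocycle_unique _ _ _ mu U Uinv hU A hA c hcm T Tinv TK TiK hcae haper _ hcA'.
rewrite /phi_int.
change (\int[mu]_x hfun R phi (cA' x) <= \int[mu]_x hfun R phi (c x))%E.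
rewrite (@ae_eq_integral _ _ _ mu setT (fun x => hfun R phi (cA d X U A c x))
   (fun x => hfun R phi (cA' x))) //.
- apply: hc_meas; exact: hcA'.1.
- apply: hc_meas; exact: (@cA_level_meas _ _ _ mu U Uinv hU A hA c hcm).
- by rewrite /ae_eq; apply: filterS ae => x /= ->.
Qed.
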